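(* For every $m\ge1$, the cardinality sensitivity of DSIC one-player auctions satisfies $\mu_c(m)=1$.
   Context: One-player setting with $m$ items: types $\theta\in\mathbb R^m$, allocations in $\{0,1\}^m$; an allocation function $f:\mathbb R^m\to\{0,1\}^m$ is implementable if there is a payment function $p$ with $\theta\cdot f(\theta)-p(\theta)\ge\theta\cdot f(\theta')-p(\theta')$ for all $\theta,\theta'$. Difference sets $Q_a=\mathrm{cl}\{\theta:f(\theta)=a\}$; indifference complex $\mathcal I(f)=\{\mathcal O\subseteq\{0,1\}^m:\bigcap_{a\in\mathcal O}Q_a\ne\emptyset\}$. Let $\Phi_m$ be the set of indifference complexes $\mathcal I(f)$ of implementable $f$. The cardinality distance is $\mathrm{Cd}(a,b)=\big||a|_1-|b|_1\big|$. The cardinality sensitivity is $\mu_c(m)=\min_{\mathcal I\in\Phi_m}\max\{\mathrm{Cd}(a,b): a,b\in F\text{ for some }F\in\mathcal I\}$.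
   Formalization: $\Phi_m$ collects the indifference complexes $\mathcal I(f)$ only of implementable f that are onto $\{0,1\}^m$, every allocation being f(θ) for some type θ. The paper assumes this as well. *)

(* Defs.v *)
From HB Require Import structures.
From mathcomp Require Import all_boot all_order all_algebra.
From mathcomp Require Import all_classical all_reals all_analysis.
Set Implicit Arguments. Unset Strict Implicit. Unset Printing Implicit Defensive.
Import Order.TTheory GRing.Theory Num.Theory.
Import numFieldTopology.Exports.
Local Open Scope classical_set_scope.
Local Open Scope ring_scope.

Definition alloc (m : nat) := {ffun 'I_m -> bool}.

(* Types: theta in R^m, represented as row vectors 'rV[R]_m (with their
   standard normed/topological structure from MathComp-Analysis). *)

Definition dotp {R : realType} {m : nat} (t : 'rV[R]_m) (a : alloc m) : R :=
  \sum_(i < m) t ord0 i * (a i)%:R.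

Definition implementable {R : realType} {m : nat} (f : 'rV[R]_m -> alloc m) :=
  exists p : 'rV[R]_m -> R, forall t t' : 'rV[R]_m,
    dotp t (f t') - p t' <= dotp t (f t) - p t.

Definition Qset {R : realType} {m : nat} (f : 'rV[R]_m -> alloc m) (a : alloc m)
  : set 'rV[R]_m := closure [set t | f t = a].

Definition indiff {R : realType} {m : nat} (f : 'rV[R]_m -> alloc m)
  : set {set alloc m} :=
  [set O | exists t : 'rV[R]_m, forall a, a \in O -> Qset f a t].

(* |a|_1 and the cardinality distance Cd(a,b) = | |a|_1 - |b|_1 |. *)
Definition norm1 {m : nat} (a : alloc m) : nat := #|[set i | a i]|.
Definition Cd {m : nat} (a b : alloc m) : nat :=
  ((norm1 a - norm1 b) + (norm1 b - norm1 a))%N.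

Definition Phi (R : realType) (m : nat) : set (set {set alloc m}) :=
  [set I | exists f : 'rV[R]_m -> alloc m,
     [/\ implementable f, (forall a : alloc m, exists t, f t = a) & I = indiff f]].

Definition sensitivity {m : nat} (I : set {set alloc m}) : nat :=
  \max_(F : {set alloc m} | `[< I F >]) \max_(a in F) \max_(b in F) Cd a b.

Definition is_mu_c (R : realType) (m n : nat) : Prop :=
  (exists I, @Phi R m I /\ sensitivity I = n) /\
  (forall I, @Phi R m I -> (n <= sensitivity I)%N).

(* Main.v *)
Require Import Defs.
From HB Require Import structures.
From mathcomp Require Import all_boot all_order all_algebra.
From mathcomp Require Import all_classical all_reals all_analysis.
From mathcomp Require Import lra zify.
Set Implicit Arguments. Unset Strict Implicit. Unset Printing Implicit Defensive.
Import Order.TTheory GRing.Theory Num.Theory.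
Import numFieldTopology.Exports.

Local Open Scope ring_scope.

Lemma norm1E m (a : alloc m) : norm1 a = #|[set i | a i]%SET|.
Proof. rewrite /norm1; apply: eq_card => i; rewrite !inE; apply/idP/idP; rewrite in_setE //. Qed.

Section S.
Variables (R : realType) (m : nat).

Definition val (t : 'rV[R]_m) (a : alloc m) : R := dotp t a - ((norm1 a) ^ 2)%N%:R.

Lemma two_max (t : 'rV[R]_m) (a b : alloc m) :
  (forall c, val t c <= val t a) -> (forall c, val t c <= val t b) ->
  (norm1 b + 2 <= norm1 a)%N -> False.
Proof.
move=> Ha Hb hab.
have [i /andP [ai bi]] : exists i, a i && ~~ b i.
  apply/existsP; apply: contraLR hab; rewrite negb_exists => /forallP H.
  rewrite -ltnNge; rewrite !norm1E; apply: (@leq_ltn_trans #|[set i | b i]%SET|); last by rewrite addn2.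
  apply: subset_leq_card; apply/fintype.subsetP => j; rewrite !inE => aj.
  by move: (H j); rewrite aj /= negbK.
pose c : alloc m := [ffun j => a j && (j != i)].
pose d : alloc m := [ffun j => b j || (j == i)].
have Hc : norm1 c = (norm1 a).-1.
  rewrite !norm1E (_ : [set j | c j] = [set j | a j] :\ i).
    by rewrite (cardsD1 i [set j | a j]) inE ai.
  by apply/setP => j; rewrite !inE ffunE andbC.
have Hd : norm1 d = (norm1 b).+1.
  rewrite !norm1E (_ : [set j | d j] = i |: [set j | b j]).
    by rewrite cardsU1 inE (negbTE bi).
  by apply/setP => j; rewrite !inE ffunE orbC.
have Hdot : dotp t c + dotp t d = dotp t a + dotp t b.
  rewrite /dotp -!big_split /=; apply: eq_bigr => j _; rewrite !ffunE.
  have [->|ne] := eqVneq j i; last by rewrite andbT orbF.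
  by rewrite ai (negbTE bi) /=; lra.
have Hn : ((norm1 a).-1 ^ 2 + (norm1 b).+1 ^ 2 < norm1 a ^ 2 + norm1 b ^ 2)%N.
  move: hab; case: (norm1 a) => [|ka] /=; first by rewrite addn2.
  move=> h; nia.
have := Ha c; have := Hb d; rewrite /val Hc Hd => h1 h2.
have : ((norm1 a ^ 2 + norm1 b ^ 2)%N%:R : R) <= ((norm1 a).-1 ^ 2 + (norm1 b).+1 ^ 2)%N%:R.
  rewrite !natrD; lra.
by rewrite ler_nat leqNgt Hn.
Qed.

Lemma sum_cont (I : Type) (r : seq I) (g : I -> 'rV[R]_m -> R) :
  (forall i, continuous (g i)) -> continuous (fun s => \sum_(i <- r) g i s).
Proof.
move=> Hg; elim: r => [|i r IH].
  have -> : (fun s => \sum_(i <- [::]) g i s) = (fun _ => 0).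
    by apply/funext => s; rewrite big_nil.
  exact: cst_continuous.
have -> : (fun s => \sum_(j <- i :: r) g j s) = (g i + fun s => \sum_(j <- r) g j s).
  by apply/funext => s; rewrite big_cons.
by move=> x; apply: continuousD; [exact: Hg | exact: IH].
Qed.

Lemma dotp_cont (a : alloc m) : continuous (fun s : 'rV[R]_m => dotp s a).
Proof.
rewrite /dotp; apply: (@sum_cont _ (index_enum (ordinal m)) (fun i s => s ord0 i * (a i)%:R)) => i x.
apply: (@continuousM R _ (fun s : 'rV[R]_m => s ord0 i) (fun _ => (a i)%:R)); first exact: coord_continuous.
exact: cst_continuous.
Qed.

Lemma val_cont (a b : alloc m) : continuous (fun s : 'rV[R]_m => val s a - val s b).
Proof.
have Hv c : continuous (fun s : 'rV[R]_m => val s c).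
  move=> x; apply: (@continuousB R R^o _ (fun s => dotp s c) (fun _ => ((norm1 c) ^ 2)%N%:R)).
    exact: dotp_cont.
  exact: cst_continuous.
move=> x; exact: (@continuousB R R^o _ (fun s => val s a) (fun s => val s b) x (Hv a x) (Hv b x)).
Qed.

Definition a0 : alloc m := [ffun _ => false].
Definition fstar (t : 'rV[R]_m) : alloc m := Order.arg_max a0 xpredT (val t).

Lemma fstar_max t b : val t b <= val t (fstar t).
Proof. rewrite /fstar; case: arg_maxP => // c _ H; exact: H. Qed.

Lemma fstar_impl : implementable fstar.
Proof.
exists (fun t => ((norm1 (fstar t)) ^ 2)%N%:R) => t t'.
exact: (fstar_max t (fstar t')).
Qed.

Lemma Qset_max a t : Qset fstar a t -> forall b, val t b <= val t a.
Proof.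
move=> H b.
have Hc : closed [set s : 'rV[R]_m | 0 <= val s a - val s b].
  apply: (@preimage_closed _ _ (fun s => val s a - val s b) [set x : R | 0 <= x]).
    by move=> x _; exact: val_cont.
  exact: closed_ge.
have : (closure [set s | fstar s = a] `<=` [set s : 'rV[R]_m | 0 <= val s a - val s b])%classic.
  rewrite [X in (_ `<=` X)%classic](closure_id _).1 //; apply: closureS => s /= <-.
  by rewrite subr_ge0 fstar_max.
by move/(_ t H) => /=; rewrite subr_ge0.
Qed.

Lemma card_le_m (a : alloc m) : (norm1 a <= m)%N.
Proof. by rewrite norm1E; apply: leq_trans (max_card _) _; rewrite card_ord. Qed.

Lemma fstar_onto a : exists t, fstar t = a.
Proof.
pose K : R := ((m ^ 2).+1)%:R.
pose t : 'rV[R]_m := \row_i (if a i then K else - K).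
have HK : 0 <= K by rewrite /K ler0n.
have Hs b : b != a -> val t b < val t a.
  move=> nba.
  have [i ne] : exists i, a i != b i.
    apply/existsP; apply: contraR nba; rewrite negb_exists => /forallP H.
    by apply/eqP/ffunP => j; move: (H j); rewrite negbK => /eqP.
  have Ht j : t ord0 j * (a j)%:R - t ord0 j * (b j)%:R = if a j != b j then K else 0.
    by rewrite /t mxE; case: (a j); case: (b j) => /=; lra.
  have Hd : K <= dotp t a - dotp t b.
    rewrite /dotp -sumrB (bigD1 i) //= Ht ne lerDl.
    by apply: sumr_ge0 => j _; rewrite Ht; case: ifP.
  have hk : ((norm1 a) ^ 2 <= m ^ 2)%N by rewrite leq_exp2r // card_le_m.
  have : ((norm1 a) ^ 2)%N%:R <= (m ^ 2)%N%:R :> R by rewrite ler_nat.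
  rewrite /val /K -addn1 natrD in Hd *.
  have : 0 <= ((norm1 b) ^ 2)%N%:R :> R by rewrite ler0n.
  lra.
exists t; apply/eqP; apply/negPn/negP => ne.
have := Hs _ ne; have := fstar_max t a; lra.
Qed.

Lemma max_Cd t (a b : alloc m) :
  (forall c, val t c <= val t a) -> (forall c, val t c <= val t b) -> (Cd a b <= 1)%N.
Proof.
move=> Ha Hb; rewrite /Cd.
have h1 : ~ (norm1 b + 2 <= norm1 a)%N by move=> h; exact: (two_max Ha Hb h).
have h2 : ~ (norm1 a + 2 <= norm1 b)%N by move=> h; exact: (two_max Hb Ha h).
lia.
Qed.

Lemma sens_fstar_le : (sensitivity (indiff fstar) <= 1)%N.
Proof.
apply/bigmax_leqP => F /asboolP [t Ht].
apply/bigmax_leqP => a aF; apply/bigmax_leqP => b bF.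
exact: (max_Cd (Qset_max (Ht a aF)) (Qset_max (Ht b bF))).
Qed.
End S.

Local Open Scope classical_set_scope.
Section L.
Variables (R : realType) (m : nat).
Implicit Types f : 'rV[R]_m -> alloc m.

Lemma clos_split f (a : alloc m) t :
  closure [set s | f s != a] t -> exists b, b != a /\ closure [set s | f s = b] t.
Proof.
move=> Hc; apply: contrapT => Hno.
have Hb (b : alloc m) : (@nbhs _ ('rV[R]_m : topologicalType) t) [set s | (b == a) || (f s != b)].
  have [->|nba] := eqVneq b a; first by apply: filterE.
  have : ~ closure [set s | f s = b] t by move=> h; apply: Hno; exists b.
  move/existsNP => [B /not_implyP [NB HB]].
  apply: filterS NB => s Bs; apply/negP => /eqP fsb; apply: HB; exists s.
  by split.
have N := (@filter_forall _ _ (fun b s => (b == a) || (f s != b)) _ (nbhs_filter t) Hb).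
have [s [/= fs Ns]] := Hc _ N.
by move: (Ns (f s)); rewrite eqxx orbF (negbTE fs).
Qed.

Lemma sep_point f (a : alloc m) t0 t1 : f t0 = a -> f t1 != a ->
  exists t, closure [set s | f s = a] t /\ closure [set s | f s != a] t.
Proof.
move=> h0 h1.
pose g := fun s : R => t0 + s *: (t1 - t0).
have gc : continuous g.
  move=> x; apply: (continuousD (f:=fun _ : R => t0) (g:=fun s : R => s *: (t1 - t0))); first exact: cst_continuous.
  by apply: (@continuousZr_tmp R _ R (fun s => s)); exact: cvg_id.
pose C := g @` `[0, 1].
have Cc : connected C.
  apply: connected_continuous_connected; first exact: segment_connected.
  exact: continuous_subspaceT.
pose D := [set s | f s = a]; pose E := [set s | f s != a].
apply: contrapT => Hno.
move/connectedP: Cc => /(_ (fun b => if b then C `&` E else C `&` D)); apply.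
split.
- case.
  + exists t1; split => //; exists 1; first by rewrite /= in_itv /= lexx ler01.
    by rewrite /g scale1r addrC subrK.
  + exists t0; split => //; exists 0; first by rewrite /= in_itv /= lexx ler01.
    by rewrite /g scale0r addr0.
- apply/seteqP; split => x /=; last by case => -[].
  by move=> Cx; have [fx|fx] := eqVneq (f x) a; [left|right].
- split; rewrite -subset0 => x.
  + move=> [cx [_ ex]]; apply: Hno; exists x; split => //.
      by apply: (closureS _ cx); apply: subIsetr.
    exact: subset_closure.
  + move=> [[_ dx] cx]; apply: Hno; exists x; split.
      exact: subset_closure.
    by apply: (closureS _ cx); apply: subIsetr.
Qed.
End L.

Section M.
Variables (R : realType) (m : nat).

Lemma sens_ge1 (f : 'rV[R]_m -> alloc m) : (1 <= m)%N ->
  (forall a, exists t, f t = a) -> (1 <= sensitivity (indiff f))%N.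
Proof.
move=> hm onto.
pose z : alloc m := [ffun _ => false].
pose o : alloc m := [ffun _ => true].
have oz : o != z.
  by apply/eqP => /ffunP /(_ (Ordinal hm)); rewrite !ffunE.
have [t0 h0] := onto z; have [t1 h1] := onto o.
have h1' : f t1 != z by rewrite h1.
have [t [Ht0 HtE]] := sep_point h0 h1'.
have [b [nb Hbt]] := clos_split HtE.
pose F := [set z; b]%SET.
have IF : indiff f F.
  exists t => a; rewrite !inE => /orP [] /eqP ->; [exact: Ht0 | exact: Hbt].
have nbz : (1 <= norm1 b)%N.
  rewrite norm1E card_gt0; apply/set0Pn.
  have [i bi] : exists i, b i.
    apply/existsP; apply: contraR nb; rewrite negb_exists => /forallP H.
    by apply/eqP/ffunP => j; rewrite ffunE; apply/negbTE/H.
  by exists i; rewrite inE.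
have nz : norm1 z = 0%N.
  by rewrite norm1E; apply/eqP; rewrite cards_eq0; apply/eqP/setP => j; rewrite !inE ffunE.
apply: (leq_trans _ (@leq_bigmax_cond _ (fun F => `[< indiff f F >]) (fun F => \max_(a in F) \max_(b in F) Cd a b) F _)); last by apply/asboolP.
apply: (leq_trans _ (@leq_bigmax_cond _ (fun a => a \in F) (fun a => \max_(b in F) Cd a b) b _)); last by rewrite !inE eqxx orbT.
apply: (leq_trans _ (@leq_bigmax_cond _ (fun c => c \in F) (fun c => Cd b c) z _)); last by rewrite !inE eqxx.
by rewrite /Cd nz subn0 sub0n addn0.
Qed.
End M.

Local Close Scope classical_set_scope.
Local Close Scope ring_scope.

Theorem proposition4p1 (R : realType) (m : nat) : (1 <= m)%N -> is_mu_c R m 1.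
Proof.
move=> hm; split.
  exists (indiff (@fstar R m)); split.
    exists (@fstar R m); split => //; [exact: fstar_impl | exact: fstar_onto].
  apply/eqP; rewrite eqn_leq sens_fstar_le /=; apply: sens_ge1 => //.
  exact: fstar_onto.
move=> I [f [_ onto ->]]; exact: sens_ge1.
Qed.
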